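(* Let $M$ be a manifold of dimension $n\ge3$ with pseudo-Riemannian metric $g$, and let $(\nabla,g,\nabla^* )$ be a conjugate triple of torsion free connections. Let $q>0$ be a smooth function and let $(\nabla^\sharp,g^\sharp,\nabla^{*\sharp})$ be the gauge transformed triple. Denote by $R,R^*,R^\sharp,R^{\sharp*}$ the curvature tensors of $\nabla,\nabla^*,\nabla^\sharp,\nabla^{*\sharp}$ (the first two lowered with $g$, the last two with $g^\sharp$). Then the following are equivalent: (1) $\pi_3(R)=0$; (2) $\pi_3(R^* )=0$; (3) $\pi_3(R^\sharp)=0$; (4) $\pi_3(R^{\sharp*})=0$.
   Context: Conjugate triple: $u\,g(v,w)=g(\nabla_uv,w)+g(v,\nabla^*_uw)$ for all vector fields. Gauge transformation with transition function $q$: $g^\sharp=q\,g$; $\nabla^{*\sharp}_vw=\nabla^*_vw+(d\ln q)(v)w+(d\ln q)(w)v$; and $\nabla^\sharp$ is the connection for which $(\nabla^\sharp,g^\sharp,\nabla^{*\sharp})$ is conjugate. Curvature operator $\mathcal{R}(u,v)=\nabla_u\nabla_v-\nabla_v\nabla_u-\nabla_{[u,v]}$, curvature tensor $R(x,y,z,w)=h(\mathcal{R}(x,y)z,w)$ with $h$ the relevant metric. For such a tensor with metric $h$: $Ric(R)(x,y)=h^{ij}R(e_i,x,y,e_j)$, $\Lambda Ric(x,y)=\tfrac12[Ric(x,y)-Ric(y,x)]$, $(a\cdot b)(x,y,z,w)=a(x,y)b(z,w)$, $(a\wedge b)(x,y,z,w)=a(x,z)b(y,w)-a(y,z)b(x,w)$,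 and $\pi_3(R)=-\tfrac1{n+1}[2\Lambda Ric\cdot h+\Lambda Ric\wedge h]$. *)

(* Defs.v *)
(* Local coordinate formulation on an
   open subset U of R^n. *)
From HB Require Import structures.
From mathcomp Require Import all_boot all_order all_algebra.
From mathcomp Require Import all_classical all_reals topology normedtype derive.
Set Implicit Arguments. Unset Strict Implicit. Unset Printing Implicit Defensive.
Import Order.TTheory GRing.Theory Num.Theory.
Import numFieldNormedType.Exports.
Local Open Scope ring_scope.
Local Open Scope classical_set_scope.

Section Defs.
Variables (R : realType) (n : nat).

Notation pt := 'rV[R]_n.

Definition coordvec (i : 'I_n) : pt := delta_mx 0 i.

Definition partial (i : 'I_n) (f : pt -> R) (x : pt) : R :=
  derive (f : pt -> R^o) x (coordvec i).

Fixpoint iter_partial (s : seq 'I_n) (f : pt -> R) : pt -> R :=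
  match s with
  | [::] => f
  | i :: s' => partial i (iter_partial s' f)
  end.

Definition smooth_on (U : set pt) (f : pt -> R) : Prop :=
  forall (s : seq 'I_n) (x : pt), U x -> differentiable (iter_partial s f : pt -> R^o) x.

(* metric components h i j, Christoffel symbols G i j k with
   nabla_{d_i} d_j = \sum_k G i j k d_k *)
Definition metric_comp := 'I_n -> 'I_n -> pt -> R.
Definition christoffel := 'I_n -> 'I_n -> 'I_n -> pt -> R.

Definition gmat (h : metric_comp) (x : pt) : 'M[R]_n := \matrix_(i, j) h i j x.

Definition pseudo_riemannian (U : set pt) (h : metric_comp) : Prop :=
  [/\ forall i j, smooth_on U (h i j),
      forall i j x, U x -> h i j x = h j i x &
      forall x, U x -> \det (gmat h x) != 0].

Definition connection_on (U : set pt) (G : christoffel) : Prop :=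
  forall i j k, smooth_on U (G i j k).

Definition torsion_free (U : set pt) (G : christoffel) : Prop :=
  forall i j k x, U x -> G i j k x = G j i k x.

(* conjugate triple (G, h, Gs):  u h(v,w) = h(nabla_u v, w) + h(v, nabla*_u w)
   written on coordinate vector fields *)
Definition conjugate (U : set pt) (G : christoffel) (h : metric_comp)
    (Gs : christoffel) : Prop :=
  forall i j k x, U x ->
    partial i (h j k) x =
      \sum_l G i j l x * h l k x + \sum_l Gs i k l x * h j l x.

Definition gauge_metric (q : pt -> R) (h : metric_comp) : metric_comp :=
  fun i j x => q x * h i j x.

Definition dlnq (q : pt -> R) (i : 'I_n) (x : pt) : R := partial i q x / q x.

Definition kron (i j : 'I_n) : R := if i == j then 1 else 0.

Definition gauge_dual (q : pt -> R) (Gs : christoffel) : christoffel :=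
  fun i j k x => Gs i j k x + dlnq q i x * kron j k + dlnq q j x * kron i k.

(* curvature operator components:
   Rop(d_a, d_b) d_c = \sum_l curv_op G a b c l d_l *)
Definition curv_op (G : christoffel) (a b c l : 'I_n) (x : pt) : R :=
  partial a (G b c l) x - partial b (G a c l) x
  + \sum_k (G b c k x * G a k l x - G a c k x * G b k l x).

Definition curv (G : christoffel) (h : metric_comp) (a b c d : 'I_n) (x : pt) : R :=
  \sum_l curv_op G a b c l x * h l d x.

Definition ricci (G : christoffel) (h : metric_comp) (b c : 'I_n) (x : pt) : R :=
  \sum_i \sum_j invmx (gmat h x) i j * curv G h i b c j x.

Definition skew_ricci (G : christoffel) (h : metric_comp) (b c : 'I_n) (x : pt) : R :=
  (ricci G h b c x - ricci G h c b x) / 2.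

(* pi_3(R) = -1/(n+1) [ 2 LRic . h + LRic /\ h ] *)
Definition pi3 (G : christoffel) (h : metric_comp) (a b c d : 'I_n) (x : pt) : R :=
  - (n.+1%:R)^-1 *
    (2 * (skew_ricci G h a b x * h c d x)
     + (skew_ricci G h a c x * h b d x - skew_ricci G h b c x * h a d x)).

Definition pi3_vanishes (U : set pt) (G : christoffel) (h : metric_comp) : Prop :=
  forall x, U x -> forall a b c d, pi3 G h a b c d x = 0.

End Defs.

(* Main.v *)
Require Import Defs.
From HB Require Import structures.
From mathcomp Require Import all_boot all_order all_algebra.
From mathcomp Require Import all_classical all_reals topology normedtype derive.
From mathcomp Require Import landau.
From mathcomp Require Import ring lra.
Import Order.TTheory GRing.Theory Num.Theory.
Import numFieldNormedType.Exports.
Local Open Scope ring_scope.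
Local Open Scope classical_set_scope.
Section S.
Variables (R : realType) (n : nat).
Notation pt := 'rV[R]_n.



Lemma line_quot (f : pt -> R^o) (y e : pt) (s : R) :
  (fun h : R => h^-1 *: (((fun r : R => f (y + r *: e)) \o shift s) (h *: 1) - f (y + s *: e)))
  = (fun h => h^-1 *: ((f \o shift (y + s *: e)) (h *: e) - f (y + s *: e))).
Proof.
apply: funext => h /=; congr (_ *: (f _ - _)).
by rewrite [h *: 1]mulr1 scalerDl addrCA addrC.
Qed.

Lemma line_is_derive (f : pt -> R^o) (y e : pt) (s : R) :
  derivable f (y + s *: e) e ->
  is_derive s 1 (fun r : R => f (y + r *: e)) ('D_e f (y + s *: e)).
Proof.
move=> df; split.
  by rewrite /derivable line_quot.
by rewrite /derive line_quot.
Qed.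

Lemma norm_coordvec (i : 'I_n) : `|coordvec R i| <= 1.
Proof.
rewrite /Num.Def.normr /= mx_normrE.
apply: bigmax_le => // -[a b] _ /=.
rewrite /coordvec mxE; by case: (_ && _); rewrite ?normr1 ?normr0.
Qed.

Lemma delta_approx (U : set pt) (f : pt -> R^o) (x : pt) (i j : 'I_n) :
  open U -> U x -> (forall y, U y -> differentiable f y) ->
  differentiable (partial i f : pt -> R^o) x ->
  forall eps : R, 0 < eps -> exists2 d : R, 0 < d & forall t : R, 0 < t < d ->
  `| (f (x + t *: coordvec R j + t *: coordvec R i) - f (x + t *: coordvec R i))
     - (f (x + t *: coordvec R j) - f x) - t ^+ 2 * partial j (partial i f) x|
     <= eps * t ^+ 2.
Proof.
move=> oU Ux df dg eps eps0.
set ei := coordvec R i; set ej := coordvec R j.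
set g : pt -> R^o := partial i f.
have Lj : partial j g x = 'd g x ej by rewrite /partial deriveE.
have /eqaddoP /(_ (eps / 3)) := diff_locally dg.
have e3 : 0 < eps / 3 by rewrite divr_gt0.
move=> /(_ e3) /nbhs_norm0P [d1 /= d10 H1].
have : \forall h \near (0 : pt), U (x + h).
  have hU : \near x, U x by apply: open_nbhs_nbhs; split.
  by move/nbhs0P: hU.
move=> /nbhs_norm0P [d2 /= d20 H2].
exists (Num.min d1 d2 / 2); first by rewrite divr_gt0 // lt_min d10.
move=> t /andP [t0 td].
have tle : 2 * t < Num.min d1 d2.
  by rewrite mulrC -ltr_pdivlMr.
have td1 : 2 * t < d1 by move: tle; rewrite lt_min => /andP[].
have td2 : 2 * t < d2 by move: tle; rewrite lt_min => /andP[].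
have nei := norm_coordvec i; have nej := norm_coordvec j.
have nv1 s : 0 <= s <= t -> `|t *: ej + s *: ei| <= 2 * t.
  move=> /andP [s0 st]; rewrite (le_trans (ler_normD _ _)) // !normrZ.
  rewrite (ger0_norm (ltW t0)) (ger0_norm s0).
  have := normr_ge0 ei; have := normr_ge0 ej; nra.
have nv2 s : 0 <= s <= t -> `|s *: ei| <= t.
  move=> /andP [s0 st]; rewrite normrZ ger0_norm //.
  have := normr_ge0 ei; nra.
have U1 s : 0 <= s <= t -> U (x + t *: ej + s *: ei).
  move=> hs; rewrite -addrA; apply: H2 => /=.
  by rewrite (le_lt_trans (nv1 _ hs)).
have U2 s : 0 <= s <= t -> U (x + s *: ei).
  move=> hs; apply: H2 => /=.
  by rewrite (le_lt_trans (nv2 _ hs)) // (lt_trans _ td2) // ltr_pMl // ltr1n.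
set phi := fun s : R => f (x + t *: ej + s *: ei) - f (x + s *: ei).
set dphi := fun s : R => g (x + t *: ej + s *: ei) - g (x + s *: ei).
have Dphi s : 0 <= s <= t -> is_derive s 1 phi (dphi s).
  move=> hs.
  have h1 := @line_is_derive f (x + t *: ej) ei s (diff_derivable (df _ (U1 _ hs))).
  have h2 := @line_is_derive f x ei s (diff_derivable (df _ (U2 _ hs))).
  exact: (is_deriveB h1 h2).
have [xi xiI Hxi] : exists2 xi, xi \in `]0, t[%R & phi t - phi 0 = dphi xi * (t - 0).
  apply: (@MVT R phi dphi 0 t) => //.
    move=> s; rewrite in_itv /= => /andP [s0 st]; apply: Dphi.
    by rewrite !ltW.
  apply: derivable_within_continuous => s; rewrite in_itv /= => hs.
  by have [] := Dphi _ hs.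
have xiI' : 0 <= xi <= t by move: xiI; rewrite in_itv /= => /andP[a b]; rewrite !ltW.
have -> : f (x + t *: ej + t *: ei) - f (x + t *: ei) - (f (x + t *: ej) - f x)
    = phi t - phi 0 by rewrite /phi !scale0r !addr0.
rewrite Hxi subr0 Lj /dphi.
set v1 := t *: ej + xi *: ei; set v2 := xi *: ei.
have E1 : x + t *: ej + xi *: ei = v1 + x by rewrite /v1 [RHS]addrC addrA.
have E2 : x + xi *: ei = v2 + x by rewrite addrC.
have B1 := H1 v1; have B2 := H1 v2.
rewrite /= in B1 B2.
have ltv1 : `|v1| < d1 by rewrite (le_lt_trans (nv1 _ xiI')).
have ltv2 : `|v2| < d1.
  by rewrite (le_lt_trans (nv2 _ xiI')) // (lt_trans _ td1) // ltr_pMl // ltr1n.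
have {B1}B1 := B1 ltv1; have {B2}B2 := B2 ltv2.
have lin : 'd g x v1 - 'd g x v2 = t * 'd g x ej.
  by rewrite /v1 /v2 -linearB addrK linearZ.
have -> : (g (x + t *: ej + xi *: ei) - g (x + xi *: ei)) * t - t ^+ 2 * 'd g x ej
   = t * ((g (v1 + x) - (g x + 'd g x v1)) - (g (v2 + x) - (g x + 'd g x v2))).
  rewrite E1 E2.
  transitivity (t * (g (v1+x) - g (v2+x)) - t * (t * 'd g x ej)); first ring.
  rewrite -lin; ring.
rewrite normrM (ger0_norm (ltW t0)).
set X := `|_ - _|.
suff K : X <= eps * t by nra.
rewrite /X.
rewrite (le_trans (ler_normB _ _)) //.
apply: le_trans (lerD B1 B2) _.
rewrite -mulrDr.
have : `|v1| + `|v2| <= 3 * t.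
  have := nv1 _ xiI'; have := nv2 _ xiI'; rewrite -/v1 -/v2.
  move=> a b; have -> : 3 * t = 2 * t + t by ring.
  exact: lerD.
move=> h; apply: le_trans (ler_wpM2l (ltW e3) h) _.
by rewrite mulrA divfK ?pnatr_eq0.
Qed.

Lemma schwarz (U : set pt) (f : pt -> R^o) (x : pt) (i j : 'I_n) :
  open U -> U x -> (forall y, U y -> differentiable f y) ->
  differentiable (partial i f : pt -> R^o) x ->
  differentiable (partial j f : pt -> R^o) x ->
  partial j (partial i f) x = partial i (partial j f) x.
Proof.
move=> oU Ux df di dj.
set A := partial j _ x; set B := partial i _ x.
apply/eqP; rewrite -subr_eq0 -normr_eq0 eq_le normr_ge0 andbT.
apply/ler_addgt0Pr => e e0; rewrite add0r.
have e2 : 0 < e / 2 by rewrite divr_gt0.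
have [d1 d10 H1] := @delta_approx U f x i j oU Ux df di (e / 2) e2.
have [d2 d20 H2] := @delta_approx U f x j i oU Ux df dj (e / 2) e2.
set t := Num.min d1 d2 / 2.
have t0 : 0 < t by rewrite divr_gt0 // lt_min d10.
have tm : t < Num.min d1 d2 by rewrite /t ltr_pdivrMr // ltr_pMr ?ltr1n // lt_min d10.
have td1 : t < d1 by move: tm; rewrite lt_min => /andP[].
have td2 : t < d2 by move: tm; rewrite lt_min => /andP[].
have {H1}H1 := H1 t; have {H2}H2 := H2 t.
rewrite t0 td1 /= in H1; rewrite t0 td2 /= in H2.
have {H1}H1 := H1 isT; have {H2}H2 := H2 isT.
set ei := coordvec R i in H1 H2; set ej := coordvec R j in H1 H2.
have Esym : f (x + t *: ej + t *: ei) - f (x + t *: ei) - (f (x + t *: ej) - f x)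
  = f (x + t *: ei + t *: ej) - f (x + t *: ej) - (f (x + t *: ei) - f x).
  rewrite [x + t *: ej + _]addrAC; ring.
rewrite Esym in H1.
set D := f (x + t *: ei + t *: ej) - f (x + t *: ej) - (f (x + t *: ei) - f x) in H1 H2.
have : `|t ^+ 2 * (A - B)| <= e * t ^+ 2.
  have -> : t ^+ 2 * (A - B) = (D - t ^+ 2 * B) - (D - t ^+ 2 * A) by ring.
  apply: le_trans (ler_normB _ _) _.
  apply: le_trans (lerD H2 H1) _.
  by rewrite -mulrDl -splitr.
rewrite normrM (ger0_norm (exprn_ge0 2 (ltW t0))) [_ * `|_|]mulrC.
by rewrite ler_pM2r // exprn_gt0.
Qed.

Implicit Types (f g : pt -> R) (x : pt) (i : 'I_n).
Definition dv (i : 'I_n) (f : pt -> R) (x : pt) := derivable (f : pt -> R^o) x (coordvec R i).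

Lemma dv_cst i (c : R) x : dv i (fun _ => c) x.
Proof. exact: derivable_cst. Qed.
Lemma partial_cst i (c : R) x : partial i (fun _ => c) x = 0.
Proof. exact: derive_cst. Qed.

Lemma dvD i f g x : dv i f x -> dv i g x -> dv i (fun y => f y + g y) x.
Proof. move=> a b; exact: (derivableD a b). Qed.
Lemma partialD i f g x : dv i f x -> dv i g x ->
  partial i (fun y => f y + g y) x = partial i f x + partial i g x.
Proof. move=> a b; exact: (deriveD a b). Qed.
Lemma dvN i f x : dv i f x -> dv i (fun y => - f y) x.
Proof. move=> a; exact: (derivableN a). Qed.
Lemma partialN i f x : dv i f x -> partial i (fun y => - f y) x = - partial i f x.
Proof. move=> a; exact: (deriveN a). Qed.
Lemma dvB i f g x : dv i f x -> dv i g x -> dv i (fun y => f y - g y) x.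
Proof. move=> a b; exact: (derivableB a b). Qed.
Lemma partialB i f g x : dv i f x -> dv i g x ->
  partial i (fun y => f y - g y) x = partial i f x - partial i g x.
Proof. move=> a b; exact: (deriveB a b). Qed.
Lemma dvM i f g x : dv i f x -> dv i g x -> dv i (fun y => f y * g y) x.
Proof. move=> a b; exact: (derivableM a b). Qed.
Lemma partialM i f g x : dv i f x -> dv i g x ->
  partial i (fun y => f y * g y) x = partial i f x * g x + f x * partial i g x.
Proof. move=> a b; rewrite /partial (deriveM a b) addrC; congr (_ + _); exact: mulrC. Qed.
Lemma dvV i f x : f x != 0 -> dv i f x -> dv i (fun y => (f y)^-1) x.
Proof. move=> a b; exact: (derivableV a b). Qed.
Lemma partialV i f x : f x != 0 -> dv i f x ->
  partial i (fun y => (f y)^-1) x = - (partial i f x) / (f x) ^+ 2.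
Proof.
move=> a b; rewrite /partial (deriveV a b).
change (- (f x ^- 2) * partial i f x = - partial i f x / f x ^+ 2).
by rewrite mulrC mulrN mulNr.
Qed.

Lemma dv_sum (I : Type) (r : seq I) (P : pred I) (F : I -> pt -> R) i x :
  (forall k, P k -> dv i (F k) x) -> dv i (fun y => \sum_(k <- r | P k) F k y) x.
Proof.
move=> H; elim: r => [|a r IH].
  rewrite (_ : (fun y => _) = (fun _ => 0)); first exact: dv_cst.
  by apply: funext => y; rewrite big_nil.
case Pa: (P a).
  rewrite (_ : (fun y => _) = (fun y => F a y + \sum_(k <- r | P k) F k y)).
    exact: dvD (H _ Pa) IH.
  by apply: funext => y; rewrite big_cons Pa.
rewrite (_ : (fun y => _) = (fun y => \sum_(k <- r | P k) F k y)) //.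
by apply: funext => y; rewrite big_cons Pa.
Qed.

Lemma partial_sum (I : Type) (r : seq I) (P : pred I) (F : I -> pt -> R) i x :
  (forall k, P k -> dv i (F k) x) ->
  partial i (fun y => \sum_(k <- r | P k) F k y) x = \sum_(k <- r | P k) partial i (F k) x.
Proof.
move=> H; elim: r => [|a r IH].
  rewrite (_ : (fun y => _) = (fun _ => 0)); first by rewrite partial_cst big_nil.
  by apply: funext => y; rewrite big_nil.
case Pa: (P a).
  rewrite (_ : (fun y => _) = (fun y => F a y + \sum_(k <- r | P k) F k y)).
    by rewrite partialD ?IH ?big_cons ?Pa //; [exact: H | exact: dv_sum].
  by apply: funext => y; rewrite big_cons Pa.
rewrite (_ : (fun y => _) = (fun y => \sum_(k <- r | P k) F k y)).
  by rewrite IH big_cons Pa.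
by apply: funext => y; rewrite big_cons Pa.
Qed.

Lemma dv_prod (I : Type) (r : seq I) (P : pred I) (F : I -> pt -> R) i x :
  (forall k, P k -> dv i (F k) x) -> dv i (fun y => \prod_(k <- r | P k) F k y) x.
Proof.
move=> H; elim: r => [|a r IH].
  rewrite (_ : (fun y => _) = (fun _ => 1)); first exact: dv_cst.
  by apply: funext => y; rewrite big_nil.
case Pa: (P a).
  rewrite (_ : (fun y => _) = (fun y => F a y * \prod_(k <- r | P k) F k y)).
    exact: dvM (H _ Pa) IH.
  by apply: funext => y; rewrite big_cons Pa.
rewrite (_ : (fun y => _) = (fun y => \prod_(k <- r | P k) F k y)) //.
by apply: funext => y; rewrite big_cons Pa.
Qed.

Lemma near_open (U : set pt) x : open U -> U x -> \near x, U x.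
Proof. by move=> oU Ux; apply: open_nbhs_nbhs; split. Qed.

Lemma partial_loc (U : set pt) f g i x : open U -> U x ->
  (forall y, U y -> f y = g y) -> partial i f x = partial i g x.
Proof.
move=> oU Ux fg; apply: near_eq_derive.
near=> y; apply: fg; near: y; exact: near_open oU Ux.
Unshelve. all: by end_near.
Qed.

Lemma dv_loc (U : set pt) f g i x : open U -> U x ->
  (forall y, U y -> f y = g y) -> dv i f x -> dv i g x.
Proof.
move=> oU Ux fg; apply: near_eq_derivable.
near=> y; apply: fg; near: y; exact: near_open oU Ux.
Unshelve. all: by end_near.
Qed.

Lemma iter_partial_rcons (s : seq 'I_n) i f :
  iter_partial s (partial i f) = iter_partial (rcons s i) f.
Proof. by elim: s => //= a s ->. Qed.

Lemma smooth_partial (U : set pt) f i : smooth_on U f -> smooth_on U (partial i f).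
Proof. by move=> sf s y Uy; rewrite iter_partial_rcons; apply: sf. Qed.

Lemma smooth_diff (U : set pt) f x : smooth_on U f -> U x -> differentiable (f : pt -> R^o) x.
Proof. by move=> sf Ux; apply: (sf [::] x Ux). Qed.

Lemma smooth_dv (U : set pt) f i x : smooth_on U f -> U x -> dv i f x.
Proof. by move=> sf Ux; apply: diff_derivable; apply: smooth_diff sf Ux. Qed.
Arguments smooth_dv {U f} i {x}.
Arguments smooth_partial {U f} i.
Arguments smooth_diff {U f x}.
Arguments partial_loc {U f g i x}.
Arguments dv_loc {U f g i x}.
Arguments dvD {i f g x}. Arguments partialD {i f g x}.
Arguments dvB {i f g x}. Arguments partialB {i f g x}.
Arguments dvM {i f g x}. Arguments partialM {i f g x}.
Arguments dvN {i f x}. Arguments partialN {i f x}.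
Arguments dvV {i f x}. Arguments partialV {i f x}.

Lemma schwarz_smooth (U : set pt) f i j x : open U -> smooth_on U f -> U x ->
  partial j (partial i f) x = partial i (partial j f) x.
Proof.
move=> oU sf Ux; apply: (@schwarz U f x i j oU Ux).
- by move=> y Uy; apply: smooth_diff sf Uy.
- exact: (sf [:: i] x Ux).
- exact: (sf [:: j] x Ux).
Qed.

Arguments schwarz_smooth {U f} i j {x}.

Lemma dv_det (k : nat) (M : pt -> 'M[R]_k) i x :
  (forall a b, dv i (fun y => M y a b) x) -> dv i (fun y => \det (M y)) x.
Proof.
move=> H; rewrite /determinant.
apply: dv_sum => s _; apply: dvM; first exact: dv_cst.
by apply: dv_prod => a _; apply: H.
Qed.

Lemma dv_cofactor (k : nat) (M : pt -> 'M[R]_k) i x a b :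
  (forall a b, dv i (fun y => M y a b) x) -> dv i (fun y => cofactor (M y) a b) x.
Proof.
move=> H; rewrite /cofactor; apply: dvM; first exact: dv_cst.
apply: dv_det => c d.
rewrite (_ : (fun y => _) = (fun y => M y (lift a c) (lift b d))); first exact: H.
by apply: funext => y; rewrite !mxE.
Qed.

Lemma invmx_entry (k : nat) (A : 'M[R]_k) a b : \det A != 0 ->
  invmx A a b = (\det A)^-1 * cofactor A b a.
Proof.
move=> dA; rewrite /invmx unitmxE unitfE dA mxE; congr (_ * _).
by rewrite /adjugate mxE.
Qed.

Lemma dv_invmx (U : set pt) (M : pt -> 'M[R]_n) i x a b :
  open U -> U x -> (forall y, U y -> \det (M y) != 0) ->
  (forall a b, dv i (fun y => M y a b) x) -> dv i (fun y => invmx (M y) a b) x.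
Proof.
move=> oU Ux dM H.
apply: (@dv_loc U (fun y => (\det (M y))^-1 * cofactor (M y) b a)) => //.
  by move=> y Uy; rewrite invmx_entry // dM.
apply: dvM; last exact: dv_cofactor.
by apply: dvV; [exact: dM | exact: dv_det].
Qed.

Lemma det_row_nz (A : 'M[R]_n) b : \det A != 0 -> exists d, A b d != 0.
Proof.
move=> dA; apply/existsP; apply: contraNT dA => /existsPn H.
rewrite (expand_det_row _ b) big1 // => j _.
by move/negPn: (H j) => /eqP ->; rewrite mul0r.
Qed.

Lemma solve_row (M : 'M[R]_n) (u v : 'I_n -> R) : \det M != 0 ->
  (forall k, \sum_l u l * M l k = v k) -> forall m, u m = \sum_k v k * invmx M k m.
Proof.
move=> dM H m.
have uM : M \in unitmx by rewrite unitmxE unitfE.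
have E : (\row_l u l) *m M = \row_k v k.
  by apply/matrixP => a k; rewrite !mxE -H; apply: eq_bigr => l _; rewrite mxE.
have := congr1 (fun X => (X *m invmx M) 0 m) E.
rewrite /= mulmxK // !mxE => ->; apply: eq_bigr => k _; by rewrite mxE.
Qed.

Definition om (Ga : christoffel R n) (b c : 'I_n) (x : pt) : R :=
  \sum_i partial b (Ga i c i) x.

Definition closedU (U : set pt) (Ga : christoffel R n) : Prop :=
  forall x, U x -> forall b c, om Ga b c x = om Ga c b x.

Lemma sum_delta (F : 'I_n -> R) i : \sum_l F l * (1%:M : 'M[R]_n) i l = F i.
Proof.
rewrite (bigD1 i) //= mxE eqxx mulr1n mulr1 big1 ?addr0 // => l /negbTE li.
by rewrite mxE eq_sym li mulr0n mulr0.
Qed.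

Lemma ricci_trace (Ga : christoffel R n) (h : metric_comp R n) b c x :
  (forall i j, h i j x = h j i x) -> \det (gmat h x) != 0 ->
  ricci Ga h b c x = \sum_i curv_op Ga i b c i x.
Proof.
move=> hs dh; rewrite /ricci /curv; apply: eq_bigr => i _.
transitivity (\sum_l curv_op Ga i b c l x * (invmx (gmat h x) *m gmat h x) i l).
  rewrite (eq_bigr (fun j => \sum_l invmx (gmat h x) i j * (curv_op Ga i b c l x * h l j x))); last first.
    by move=> j _; rewrite big_distrr.
  rewrite exchange_big; apply: eq_bigr => l _ /=; rewrite mxE big_distrr.
  by apply: eq_bigr => j _ /=; rewrite hs !mxE; ring.
by rewrite mulVmx ?unitmxE ?unitfE // sum_delta.
Qed.

Lemma skew_ricciE (U : set pt) (Ga : christoffel R n) (h : metric_comp R n) b c x :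
  open U -> U x -> torsion_free U Ga ->
  (forall i j, h i j x = h j i x) -> \det (gmat h x) != 0 ->
  skew_ricci Ga h b c x = - (om Ga b c x - om Ga c b x) / 2.
Proof.
move=> oU Ux tf hs dh.
rewrite /skew_ricci !ricci_trace //.
have e1 i : partial i (Ga b c i) x = partial i (Ga c b i) x.
  by apply: (@partial_loc U) => // y Uy; apply: tf.
have eQ : \sum_i \sum_k (Ga b c k x * Ga i k i x - Ga i c k x * Ga b k i x)
        = \sum_i \sum_k (Ga c b k x * Ga i k i x - Ga i b k x * Ga c k i x).
  rewrite (eq_bigr (fun i => \sum_k Ga b c k x * Ga i k i x - \sum_k Ga i c k x * Ga b k i x));
    last by move=> i _; rewrite sumrB.
  rewrite [RHS](eq_bigr (fun i => \sum_k Ga c b k x * Ga i k i x - \sum_k Ga i b k x * Ga c k i x));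
    last by move=> i _; rewrite sumrB.
  rewrite !sumrB; congr (_ - _).
    by apply: eq_bigr => i _; apply: eq_bigr => k _; rewrite tf.
  rewrite [RHS]exchange_big; apply: eq_bigr => i _; apply: eq_bigr => k _ /=.
  by rewrite (tf i c) // (tf b k) // mulrC.
have -> : \sum_i curv_op Ga i b c i x - \sum_i curv_op Ga i c b i x
   = \sum_i (partial c (Ga i b i) x - partial b (Ga i c i) x)
     + (\sum_i \sum_k (Ga b c k x * Ga i k i x - Ga i c k x * Ga b k i x)
       - \sum_i \sum_k (Ga c b k x * Ga i k i x - Ga i b k x * Ga c k i x)).
  rewrite -!sumrB -big_split /=; apply: eq_bigr => i _; rewrite /curv_op e1; ring.
by rewrite eQ subrr addr0 sumrB /om; ring.
Qed.

Lemma pi3_iff (Ga : christoffel R n) (h : metric_comp R n) x :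
  \det (gmat h x) != 0 ->
  (forall a b c d, pi3 Ga h a b c d x = 0) <-> (forall a b, skew_ricci Ga h a b x = 0).
Proof.
move=> dh; split => H; last by move=> a b c d; rewrite /pi3 !H; ring.
move=> a b.
have Sbb : skew_ricci Ga h b b x = 0 by rewrite /skew_ricci subrr mul0r.
have [d hd] := det_row_nz (gmat h x) b dh; rewrite mxE in hd.
have E := H a b b d; rewrite /pi3 Sbb mul0r subr0 in E.
have : skew_ricci Ga h a b x * (- 3%:R * h b d x * (n.+1%:R)^-1) = 0.
  by rewrite -[RHS]E; ring.
move/eqP; rewrite mulf_eq0 => /orP [/eqP //|].
rewrite !mulf_eq0 invr_eq0 oppr_eq0 !pnatr_eq0 /= (negbTE hd) //.
Qed.

Lemma pi3_closed (U : set pt) (Ga : christoffel R n) (h : metric_comp R n) :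
  open U -> torsion_free U Ga ->
  (forall x, U x -> (forall i j, h i j x = h j i x) /\ \det (gmat h x) != 0) ->
  pi3_vanishes U Ga h <-> closedU U Ga.
Proof.
move=> oU tf hh; split => H x Ux.
  have [hs dh] := hh x Ux.
  move=> b c; have := (@pi3_iff Ga h x dh).1 (H x Ux) b c.
  rewrite (@skew_ricciE U Ga h b c x oU Ux tf hs dh) => /eqP.
  rewrite mulf_eq0 invr_eq0 pnatr_eq0 orbF oppr_eq0 subr_eq0 => /eqP //.
have [hs dh] := hh x Ux.
apply/(@pi3_iff Ga h x dh) => b c.
by rewrite (@skew_ricciE U Ga h b c x oU Ux tf hs dh) (H x Ux) subrr oppr0 mul0r.
Qed.

Lemma sum_kron (F : 'I_n -> R) k : \sum_l F l * kron R k l = F k.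
Proof.
rewrite (bigD1 k) //= /kron eqxx mulr1 big1 ?addr0 // => l /negbTE lk.
by rewrite eq_sym lk mulr0.
Qed.

Lemma sum_kron' (F : 'I_n -> R) k : \sum_l F l * kron R l k = F k.
Proof.
rewrite (bigD1 k) //= /kron eqxx mulr1 big1 ?addr0 // => l /negbTE lk.
by rewrite lk mulr0.
Qed.

Lemma dv_dlnq (U : set pt) q i c x : smooth_on U q -> U x -> q x != 0 ->
  dv i (dlnq q c) x.
Proof.
move=> sq Ux qx; rewrite /dlnq; apply: dvM.
  exact: smooth_dv (smooth_partial _ sq) Ux.
by apply: dvV => //; apply: smooth_dv sq Ux.
Qed.

Arguments dv_dlnq {U q} i c {x}.

Lemma dlnq_sym (U : set pt) q b c x : open U -> smooth_on U q -> U x -> q x != 0 ->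
  partial b (dlnq q c) x = partial c (dlnq q b) x.
Proof.
move=> oU sq Ux qx; rewrite /dlnq.
have dq i : dv i q x := smooth_dv i sq Ux.
have dpq i j : dv i (partial j q) x := smooth_dv i (smooth_partial j sq) Ux.
have dV i : dv i (fun y => (q y)^-1) x by apply: dvV.
rewrite (partialM (dpq b c) (dV b)) (partialM (dpq c b) (dV c)).
rewrite (partialV qx (dq b)) (partialV qx (dq c)).
rewrite (schwarz_smooth b c oU sq Ux); field.
done.
Qed.

Lemma partialMc i f (k : R) x : dv i f x -> partial i (fun y => f y * k) x = partial i f x * k.
Proof.
move=> df; rewrite (partialM df (dv_cst i k x)) partial_cst mulr0 addr0 //.
Qed.


Lemma dvMc i f (k : R) x : dv i f x -> dv i (fun y => f y * k) x.
Proof. by move=> df; apply: (dvM df (dv_cst i k x)). Qed.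
Arguments dvMc {i f} k {x}. Arguments partialMc {i f} k {x}.

Lemma gd_term (U : set pt) q (Gs : christoffel R n) b c i x :
  U x -> smooth_on U q -> q x != 0 -> connection_on U Gs ->
  partial b (gauge_dual q Gs i c i) x
  = partial b (Gs i c i) x + partial b (dlnq q i) x * kron R c i + partial b (dlnq q c) x.
Proof.
move=> Ux sq qx cG.
have dG : dv b (Gs i c i) x := smooth_dv b (cG i c i) Ux.
have dl j : dv b (dlnq q j) x := dv_dlnq b j sq Ux qx.
have dlk j (k : R) : dv b (fun y => dlnq q j y * k) x := dvMc k (dl j).
have E1 := partialD (dvD dG (dlk i (kron R c i))) (dlk c (kron R i i)).
have E2 := partialD dG (dlk i (kron R c i)).
have E3 := partialMc (kron R c i) (dl i).
have E4 := partialMc (kron R i i) (dl c).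
have k1 : kron R i i = 1 by rewrite /kron eqxx.
apply: (etrans E1); congr (_ + _); last by apply: (etrans E4); rewrite k1 mulr1.
apply: (etrans E2); congr (_ + _); exact: E3.
Qed.

Lemma om_gd (U : set pt) q (Gs : christoffel R n) b c x :
  U x -> smooth_on U q -> q x != 0 -> connection_on U Gs ->
  om (gauge_dual q Gs) b c x = om Gs b c x + (n.+1)%:R * partial b (dlnq q c) x.
Proof.
move=> Ux sq qx cG; rewrite /om.
rewrite (eq_bigr (fun i => partial b (Gs i c i) x + partial b (dlnq q i) x * kron R c i
                         + partial b (dlnq q c) x)); last first.
  by move=> i _; exact: (@gd_term U q Gs b c i x Ux sq qx cG).
rewrite !big_split /= sum_kron sumr_const card_ord -[in RHS]addn1 natrD.
rewrite mulrDl mul1r mulr_natl; ring.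
Qed.

Definition wq (q : pt -> R) (h : metric_comp R n) (m : 'I_n) (y : pt) : R :=
  \sum_k dlnq q k y * invmx (gmat h y) k m.

Lemma sum_delta' (F : 'I_n -> R) i : \sum_l F l * (1%:M : 'M[R]_n) l i = F i.
Proof.
rewrite (bigD1 i) //= mxE eqxx mulr1n mulr1 big1 ?addr0 // => l /negbTE li.
by rewrite mxE li mulr0n mulr0.
Qed.

Lemma sum_kron_c (a : R) (F : 'I_n -> R) k : \sum_l a * kron R k l * F l = a * F k.
Proof.
rewrite (bigD1 k) //= /kron eqxx mulr1 big1 ?addr0 // => l /negbTE lk.
by rewrite eq_sym lk mulr0 mul0r.
Qed.

Lemma gsh_key (U : set pt) (G Gs Gsh : christoffel R n) (g : metric_comp R n) q i j k y :
  U y -> smooth_on U q -> q y != 0 -> (forall a b, smooth_on U (g a b)) ->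
  conjugate U G g Gs -> conjugate U Gsh (gauge_metric q g) (gauge_dual q Gs) ->
  \sum_l (Gsh i j l y - G i j l y) * gmat g y l k = - (dlnq q k y * g j i y).
Proof.
move=> Uy sq qy sg c1 c2.
have C1 := c1 i j k y Uy; have C2 := c2 i j k y Uy.
have L : partial i (gauge_metric q g j k) y
         = partial i q y * g j k y + q y * partial i (g j k) y.
  exact: (partialM (smooth_dv i sq Uy) (smooth_dv i (sg j k) Uy)).
rewrite L C1 in C2.
set SA := \sum_l Gsh i j l y * g l k y.
set SB := \sum_l G i j l y * g l k y.
set SC := \sum_l Gs i k l y * g j l y.
have E1 : \sum_l Gsh i j l y * gauge_metric q g l k y = q y * SA.
  rewrite /SA big_distrr; apply: eq_bigr => l _ /=; rewrite /gauge_metric /=. ring.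
have E2 : \sum_l gauge_dual q Gs i k l y * gauge_metric q g j l y
   = q y * SC + dlnq q i y * (q y * g j k y) + dlnq q k y * (q y * g j i y).
  rewrite /gauge_dual /gauge_metric.
  rewrite (eq_bigr (fun l => q y * (Gs i k l y * g j l y)
                      + dlnq q i y * kron R k l * (q y * g j l y)
                      + dlnq q k y * kron R i l * (q y * g j l y))); last first.
    by move=> l _; ring.
  by rewrite !big_split /= !sum_kron_c /SC big_distrr.
rewrite E1 E2 in C2.
have H : dlnq q i y * q y = partial i q y by rewrite /dlnq divfK.
rewrite mulrA H in C2.
have Z : q y * (SA - SB + dlnq q k y * g j i y) = 0.
  move: C2; set P := partial i q y; set a := q y; set d := dlnq q k y.
  move=> C2; rewrite -/SB -/SC in C2.
  have -> : a * (SA - SB + d * g j i y)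
    = (a * SA + (a * SC + P * g j k y + d * (a * g j i y))) - (P * g j k y + a * (SB + SC)) by ring.
  by rewrite -C2 subrr.
have : SA - SB + dlnq q k y * g j i y = 0.
  by move/eqP: Z; rewrite mulf_eq0 (negbTE qy) /= => /eqP.
move=> /eqP; rewrite addr_eq0 => /eqP <-.
rewrite /SA /SB -sumrB; apply: eq_bigr => l _; rewrite mxE; ring.
Qed.

Lemma gsh_formula (U : set pt) (G Gs Gsh : christoffel R n) (g : metric_comp R n) q i j m y :
  U y -> smooth_on U q -> q y != 0 -> (forall a b, smooth_on U (g a b)) ->
  \det (gmat g y) != 0 ->
  conjugate U G g Gs -> conjugate U Gsh (gauge_metric q g) (gauge_dual q Gs) ->
  Gsh i j m y = G i j m y - g j i y * wq q g m y.
Proof.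
move=> Uy sq qy sg dg c1 c2.
have key := @gsh_key U G Gs Gsh g q i j.
have E := @solve_row (gmat g y) (fun l => Gsh i j l y - G i j l y)
   (fun k => - (dlnq q k y * g j i y)) dg (fun k => key k y Uy sq qy sg c1 c2) m.
rewrite /= in E.
have -> : Gsh i j m y = G i j m y + (Gsh i j m y - G i j m y) by ring.
rewrite E /wq big_distrr -sumrN; congr (_ + _); apply: eq_bigr => k _ /=; ring.
Qed.

Lemma gsh_tf (U : set pt) (G Gs Gsh : christoffel R n) (g : metric_comp R n) q :
  smooth_on U q -> (forall y, U y -> q y != 0) -> (forall a b, smooth_on U (g a b)) ->
  (forall y, U y -> \det (gmat g y) != 0) -> (forall a b y, U y -> g a b y = g b a y) ->
  torsion_free U G ->
  conjugate U G g Gs -> conjugate U Gsh (gauge_metric q g) (gauge_dual q Gs) ->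
  torsion_free U Gsh.
Proof.
move=> sq qy sg dg gs tf c1 c2 i j k y Uy.
rewrite !(@gsh_formula U G Gs Gsh g q _ _ _ y Uy sq (qy y Uy) sg (dg y Uy) c1 c2).
by rewrite tf // gs.
Qed.

Lemma dv_gmat (U : set pt) (g : metric_comp R n) b x :
  U x -> (forall a c, smooth_on U (g a c)) ->
  forall a c, dv b (fun y => gmat g y a c) x.
Proof.
move=> Ux sg a c.
have -> : (fun y => gmat g y a c) = g a c by apply: funext => y; rewrite mxE.
exact: (smooth_dv b (sg a c) Ux).
Qed.

Lemma dv_wq (U : set pt) (g : metric_comp R n) q b m x :
  open U -> U x -> smooth_on U q -> q x != 0 -> (forall a c, smooth_on U (g a c)) ->
  (forall y, U y -> \det (gmat g y) != 0) -> dv b (wq q g m) x.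
Proof.
move=> oU Ux sq qx sg dg; rewrite /wq.
apply: dv_sum => k _; apply: dvM; first exact: (dv_dlnq b k sq Ux qx).
exact: (@dv_invmx U (gmat g) b x k m oU Ux dg (@dv_gmat U g b x Ux sg)).
Qed.

Lemma sum_gw (g : metric_comp R n) q c y :
  (forall a b, g a b y = g b a y) -> \det (gmat g y) != 0 ->
  \sum_i g c i y * wq q g i y = dlnq q c y.
Proof.
move=> gs dg; rewrite /wq.
rewrite (eq_bigr (fun i => \sum_k g c i y * (dlnq q k y * invmx (gmat g y) k i))); last first.
  by move=> i _; rewrite big_distrr.
rewrite exchange_big /=.
transitivity (\sum_k dlnq q k y * (invmx (gmat g y) *m gmat g y) k c).
  apply: eq_bigr => k _; rewrite mxE big_distrr; apply: eq_bigr => i _ /=.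
  by rewrite mxE gs; ring.
by rewrite mulVmx ?unitmxE ?unitfE // sum_delta'.
Qed.

Lemma om_gsh (U : set pt) (G Gs Gsh : christoffel R n) (g : metric_comp R n) q b c x :
  open U -> U x -> smooth_on U q -> (forall y, U y -> q y != 0) ->
  (forall a b, smooth_on U (g a b)) ->
  (forall y, U y -> \det (gmat g y) != 0) -> (forall a b y, U y -> g a b y = g b a y) ->
  connection_on U G ->
  conjugate U G g Gs -> conjugate U Gsh (gauge_metric q g) (gauge_dual q Gs) ->
  om Gsh b c x = om G b c x - partial b (dlnq q c) x.
Proof.
move=> oU Ux sq qy sg dg gs cG c1 c2.
have dG i j k : dv b (G i j k) x := smooth_dv b (cG i j k) Ux.
have dW i : dv b (fun y => g c i y * wq q g i y) x.
  exact: (dvM (smooth_dv b (sg c i) Ux) (@dv_wq U g q b i x oU Ux sq (qy x Ux) sg dg)).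
have T i : partial b (Gsh i c i) x
    = partial b (G i c i) x - partial b (fun y => g c i y * wq q g i y) x.
  apply: (etrans (@partial_loc U (Gsh i c i) (fun y => G i c i y - g c i y * wq q g i y) b x oU Ux _)).
    by move=> y Uy; apply: (@gsh_formula U G Gs Gsh g q i c i y Uy sq (qy y Uy) sg (dg y Uy) c1 c2).
  exact: (partialB (dG i c i) (dW i)).
rewrite /om (eq_bigr _ (fun i _ => T i)) sumrB; congr (_ - _).
have PS := @partial_sum 'I_n (index_enum _) (fun _ => true)
             (fun i y => g c i y * wq q g i y) b x (fun k _ => dW k).
apply: (etrans (esym PS)).
apply: (@partial_loc U) => // y Uy.
by apply: sum_gw => [a e|]; [apply: gs | apply: dg].
Qed.

Definition Am (h : metric_comp R n) (c : 'I_n) (y : pt) : 'M[R]_n :=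
  \matrix_(j, k) partial c (h j k) y.
Definition sig (h : metric_comp R n) (c : 'I_n) (y : pt) : R :=
  \tr (invmx (gmat h y) *m Am h c y).
Definition Pm (h : metric_comp R n) (b : 'I_n) (x : pt) : 'M[R]_n :=
  \matrix_(k, j) partial b (fun y => invmx (gmat h y) k j) x.
Definition Am2 (h : metric_comp R n) (b c : 'I_n) (x : pt) : 'M[R]_n :=
  \matrix_(j, k) partial b (partial c (h j k)) x.

Lemma trace_sum (U : set pt) (G Gs : christoffel R n) (g : metric_comp R n) c y :
  U y -> torsion_free U G -> torsion_free U Gs -> \det (gmat g y) != 0 ->
  conjugate U G g Gs ->
  \sum_i G i c i y + \sum_i Gs i c i y = sig g c y.
Proof.
move=> Uy tf tfs dg c1.
set H := gmat g y.
set Mc : 'M[R]_n := \matrix_(j, l) G c j l y.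
set Nc : 'M[R]_n := \matrix_(k, l) Gs c k l y.
have uH : H \in unitmx by rewrite unitmxE unitfE.
have EA : Am g c y = Mc *m H + H *m Nc^T.
  apply/matrixP => j k; rewrite !mxE (c1 c j k y Uy); congr (_ + _).
    by apply: eq_bigr => l _; rewrite !mxE.
  by apply: eq_bigr => l _; rewrite !mxE mulrC.
rewrite /sig -/H EA mulmxDr mxtraceD.
rewrite mxtrace_mulC -mulmxA mulmxV // mulmx1.
rewrite mulmxA mulVmx // mul1mx mxtrace_tr /mxtrace.
congr (_ + _); apply: eq_bigr => i _; rewrite mxE //.
  by rewrite tf.
by rewrite tfs.
Qed.

Lemma sigE (h : metric_comp R n) c :
  sig h c = fun y => \sum_k \sum_j invmx (gmat h y) k j * partial c (h j k) y.
Proof.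
apply: funext => y; rewrite /sig /mxtrace; apply: eq_bigr => k _.
by rewrite mxE; apply: eq_bigr => j _; rewrite mxE.
Qed.

Lemma partial_sig (U : set pt) (g : metric_comp R n) b c x :
  open U -> U x -> (forall a e, smooth_on U (g a e)) ->
  (forall y, U y -> \det (gmat g y) != 0) ->
  partial b (sig g c) x = \tr (Pm g b x *m Am g c x) + \tr (invmx (gmat g x) *m Am2 g b c x).
Proof.
move=> oU Ux sg dg.
have dI k j : dv b (fun y => invmx (gmat g y) k j) x.
  exact: (@dv_invmx U (gmat g) b x k j oU Ux dg (@dv_gmat U g b x Ux sg)).
have dA j k : dv b (partial c (g j k)) x := smooth_dv b (smooth_partial c (sg j k)) Ux.
have dP k j : dv b (fun y => invmx (gmat g y) k j * partial c (g j k) y) x := dvM (dI k j) (dA j k).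
have dS k : dv b (fun y => \sum_j invmx (gmat g y) k j * partial c (g j k) y) x.
  exact: (@dv_sum 'I_n (index_enum _) (fun _ => true)
             (fun j y => invmx (gmat g y) k j * partial c (g j k) y) b x (fun j _ => dP k j)).
have PS1 := @partial_sum 'I_n (index_enum _) (fun _ => true)
   (fun k y => \sum_j invmx (gmat g y) k j * partial c (g j k) y) b x (fun k _ => dS k).
rewrite sigE; apply: (etrans PS1).
transitivity (\sum_k \sum_j (Pm g b x k j * Am g c x j k
                            + invmx (gmat g x) k j * Am2 g b c x j k)).
  apply: eq_bigr => k _.
  have PS2 := @partial_sum 'I_n (index_enum _) (fun _ => true)
     (fun j y => invmx (gmat g y) k j * partial c (g j k) y) b x (fun j _ => dP k j).
  apply: (etrans PS2); apply: eq_bigr => j _.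
  by rewrite (partialM (dI k j) (dA j k)) !mxE.
under eq_bigr do rewrite big_split.
rewrite big_split /=; congr (_ + _); apply: eq_bigr => k _; rewrite mxE;
  by apply: eq_bigr => j _.
Qed.

Lemma Pm_eq (U : set pt) (g : metric_comp R n) b x :
  open U -> U x -> (forall a e, smooth_on U (g a e)) ->
  (forall y, U y -> \det (gmat g y) != 0) ->
  Pm g b x *m gmat g x + invmx (gmat g x) *m Am g b x = 0.
Proof.
move=> oU Ux sg dg.
have dI k j : dv b (fun y => invmx (gmat g y) k j) x.
  exact: (@dv_invmx U (gmat g) b x k j oU Ux dg (@dv_gmat U g b x Ux sg)).
have dG j m : dv b (g j m) x := smooth_dv b (sg j m) Ux.
apply/matrixP => k m; rewrite !mxE.
have dP j : dv b (fun y => invmx (gmat g y) k j * g j m y) x := dvM (dI k j) (dG j m).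
have PS := @partial_sum 'I_n (index_enum _) (fun _ => true)
   (fun j y => invmx (gmat g y) k j * g j m y) b x (fun j _ => dP j).
have L : partial b (fun y => \sum_j invmx (gmat g y) k j * g j m y) x
       = partial b (fun _ => (1%:M : 'M[R]_n) k m) x.
  apply: (@partial_loc U) => // y Uy.
  have <- : (invmx (gmat g y) *m gmat g y) k m = (1%:M : 'M[R]_n) k m.
    by rewrite mulVmx // unitmxE unitfE dg.
  by rewrite mxE; apply: eq_bigr => j _; rewrite mxE.
rewrite partial_cst in L.
apply: (etrans _ L); apply: esym; apply: (etrans PS).
transitivity (\sum_j (partial b (fun y => invmx (gmat g y) k j) x * g j m x
               + invmx (gmat g x) k j * partial b (g j m) x)).
  by apply: eq_bigr => j _; rewrite (partialM (dI k j) (dG j m)).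
rewrite big_split /=; congr (_ + _); apply: eq_bigr => j _; by rewrite !mxE.
Qed.

Lemma Pm_val (U : set pt) (g : metric_comp R n) b x :
  open U -> U x -> (forall a e, smooth_on U (g a e)) ->
  (forall y, U y -> \det (gmat g y) != 0) ->
  Pm g b x = - (invmx (gmat g x) *m Am g b x *m invmx (gmat g x)).
Proof.
move=> oU Ux sg dg.
have uH : gmat g x \in unitmx by rewrite unitmxE unitfE dg.
have E := @Pm_eq U g b x oU Ux sg dg.
have E' : Pm g b x *m gmat g x = - (invmx (gmat g x) *m Am g b x).
  apply/eqP. rewrite -addr_eq0. by rewrite E.
have -> : Pm g b x = (Pm g b x *m gmat g x) *m invmx (gmat g x) by rewrite mulmxK.
by rewrite E' mulNmx.
Qed.

Lemma tA3 (U : set pt) (g : metric_comp R n) b c x :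
  open U -> U x -> (forall a e, smooth_on U (g a e)) -> Am2 g b c x = Am2 g c b x.
Proof.
move=> oU Ux sg.
rewrite /Am2.
apply: eq_mx => j k.
exact: (schwarz_smooth c b oU (sg j k) Ux).
Qed.

Lemma sig_sym (U : set pt) (g : metric_comp R n) b c x :
  open U -> U x -> (forall a e, smooth_on U (g a e)) ->
  (forall y, U y -> \det (gmat g y) != 0) ->
  partial b (sig g c) x = partial c (sig g b) x.
Proof.
move=> oU Ux sg dg.
have A2 := @tA3 U g b c x oU Ux sg.
have P1 := @partial_sig U g b c x oU Ux sg dg.
have P2 := @partial_sig U g c b x oU Ux sg dg.
have V1 := @Pm_val U g b x oU Ux sg dg.
have V2 := @Pm_val U g c x oU Ux sg dg.
rewrite A2 V1 in P1; rewrite V2 in P2.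
apply: (etrans P1). apply: esym. apply: (etrans P2).
apply: esym.
move: (invmx (gmat g x)) (Am g b x) (Am g c x) (Am2 g c b x) => Hi Ab Ac A.
have T : \tr (- (Hi *m Ab *m Hi) *m Ac) = \tr (- (Hi *m Ac *m Hi) *m Ab).
  have trN (B : 'M[R]_n) : \tr (- B) = - \tr B.
    by rewrite /mxtrace -sumrN; apply: eq_bigr => i _; rewrite mxE.
  have K : \tr (Hi *m Ab *m Hi *m Ac) = \tr (Hi *m Ac *m Hi *m Ab).
    by rewrite -(mulmxA (Hi *m Ab)) -(mulmxA (Hi *m Ac)) [LHS]mxtrace_mulC.
  by rewrite !mulNmx !trN K.
by rewrite T.
Qed.

Lemma om_sum (U : set pt) (G Gs : christoffel R n) (g : metric_comp R n) b c x :
  open U -> U x -> connection_on U G -> connection_on U Gs ->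
  torsion_free U G -> torsion_free U Gs ->
  (forall y, U y -> \det (gmat g y) != 0) -> conjugate U G g Gs ->
  om G b c x + om Gs b c x = partial b (sig g c) x.
Proof.
move=> oU Ux cG cGs tG tGs dg c1.
have dG i : dv b (G i c i) x := smooth_dv b (cG i c i) Ux.
have dGs i : dv b (Gs i c i) x := smooth_dv b (cGs i c i) Ux.
have PS1 := @partial_sum 'I_n (index_enum _) (fun _ => true)
   (fun i y => G i c i y) b x (fun i _ => dG i).
have PS2 := @partial_sum 'I_n (index_enum _) (fun _ => true)
   (fun i y => Gs i c i y) b x (fun i _ => dGs i).
have dS1 : dv b (fun y => \sum_i G i c i y) x :=
  @dv_sum 'I_n (index_enum _) (fun _ => true) (fun i y => G i c i y) b x (fun i _ => dG i).
have dS2 : dv b (fun y => \sum_i Gs i c i y) x :=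
  @dv_sum 'I_n (index_enum _) (fun _ => true) (fun i y => Gs i c i y) b x (fun i _ => dGs i).
apply: esym.
apply: (etrans (@partial_loc U (sig g c) (fun y => \sum_i G i c i y + \sum_i Gs i c i y) b x oU Ux _)).
  by move=> y Uy; apply: esym; apply: (@trace_sum U G Gs g c y Uy tG tGs (dg y Uy) c1).
apply: (etrans (partialD dS1 dS2)).
exact: (f_equal2 +%R PS1 PS2).
Qed.

Lemma sub_cancel (A B d1 d2 : R) : d1 = d2 -> A - d1 = B - d2 -> A = B.
Proof. by move=> -> /addIr. Qed.

Lemma add_cancel (A B d1 d2 k : R) : d1 = d2 -> A + k * d1 = B + k * d2 -> A = B.
Proof. by move=> -> /addIr. Qed.

Lemma closed_G_Gs (U : set pt) (G Gs : christoffel R n) (g : metric_comp R n) :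
  open U -> connection_on U G -> connection_on U Gs ->
  torsion_free U G -> torsion_free U Gs -> (forall a e, smooth_on U (g a e)) ->
  (forall y, U y -> \det (gmat g y) != 0) -> conjugate U G g Gs ->
  closedU U G <-> closedU U Gs.
Proof.
move=> oU cG cGs tG tGs sg dg c1.
have Sm x b c : U x -> om G b c x + om Gs b c x = partial b (sig g c) x.
  by move=> Ux; apply: (@om_sum U G Gs g b c x oU Ux cG cGs tG tGs dg c1).
have S x b c : U x -> om Gs b c x = partial b (sig g c) x - om G b c x.
  move=> Ux; apply: (etrans _ (f_equal2 (fun a e => a - e) (Sm x b c Ux) (erefl (om G b c x)))).
  ring.
have S' x b c : U x -> om G b c x = partial b (sig g c) x - om Gs b c x.
  move=> Ux; apply: (etrans _ (f_equal2 (fun a e => a - e) (Sm x b c Ux) (erefl (om Gs b c x)))).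
  ring.
split => H x Ux b c.
  apply: (etrans (S x b c Ux)); apply: esym; apply: (etrans (S x c b Ux)); apply: esym.
  exact: (f_equal2 (fun a e => a - e) (@sig_sym U g b c x oU Ux sg dg) (H x Ux b c)).
apply: (etrans (S' x b c Ux)); apply: esym; apply: (etrans (S' x c b Ux)); apply: esym.
exact: (f_equal2 (fun a e => a - e) (@sig_sym U g b c x oU Ux sg dg) (H x Ux b c)).
Qed.

Lemma closed_G_Gsh (U : set pt) (G Gs Gsh : christoffel R n) (g : metric_comp R n) q :
  open U -> smooth_on U q -> (forall y, U y -> q y != 0) ->
  (forall a b, smooth_on U (g a b)) ->
  (forall y, U y -> \det (gmat g y) != 0) -> (forall a b y, U y -> g a b y = g b a y) ->
  connection_on U G ->
  conjugate U G g Gs -> conjugate U Gsh (gauge_metric q g) (gauge_dual q Gs) ->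
  closedU U G <-> closedU U Gsh.
Proof.
move=> oU sq qy sg dg gs cG c1 c2.
have E x b c : U x -> om Gsh b c x = om G b c x - partial b (dlnq q c) x.
  by move=> Ux; apply: (@om_gsh U G Gs Gsh g q b c x oU Ux sq qy sg dg gs cG c1 c2).
have D x b c : U x -> partial b (dlnq q c) x = partial c (dlnq q b) x.
  by move=> Ux; apply: (@dlnq_sym U q b c x oU sq Ux (qy x Ux)).
split => H x Ux b c.
  apply: (etrans (E x b c Ux)); apply: esym; apply: (etrans (E x c b Ux)); apply: esym.
  exact: (f_equal2 (fun a e => a - e) (H x Ux b c) (D x b c Ux)).
apply: (@sub_cancel _ _ _ _ (D x b c Ux)).
exact: (etrans (esym (E x b c Ux)) (etrans (H x Ux b c) (E x c b Ux))).
Qed.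

Lemma closed_Gs_Gd (U : set pt) (Gs : christoffel R n) q :
  open U -> smooth_on U q -> (forall y, U y -> q y != 0) -> connection_on U Gs ->
  closedU U Gs <-> closedU U (gauge_dual q Gs).
Proof.
move=> oU sq qy cGs.
have E x b c : U x -> om (gauge_dual q Gs) b c x = om Gs b c x + (n.+1)%:R * partial b (dlnq q c) x.
  by move=> Ux; apply: (@om_gd U q Gs b c x Ux sq (qy x Ux) cGs).
have D x b c : U x -> partial b (dlnq q c) x = partial c (dlnq q b) x.
  by move=> Ux; apply: (@dlnq_sym U q b c x oU sq Ux (qy x Ux)).
split => H x Ux b c.
  apply: (etrans (E x b c Ux)); apply: esym; apply: (etrans (E x c b Ux)); apply: esym.
  exact: (f_equal2 (fun a e => a + (n.+1)%:R * e) (H x Ux b c) (D x b c Ux)).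
apply: (@add_cancel _ _ _ _ _ (D x b c Ux)).
exact: (etrans (esym (E x b c Ux)) (etrans (H x Ux b c) (E x c b Ux))).
Qed.

Lemma gd_tf (U : set pt) (Gs : christoffel R n) q :
  torsion_free U Gs -> torsion_free U (gauge_dual q Gs).
Proof. by move=> tf i j k y Uy; rewrite /gauge_dual tf //; ring. Qed.

Lemma gauge_metric_ok (U : set pt) (g : metric_comp R n) q :
  (forall y, U y -> q y != 0) ->
  (forall x, U x -> (forall i j, g i j x = g j i x) /\ \det (gmat g x) != 0) ->
  forall x, U x -> (forall i j, gauge_metric q g i j x = gauge_metric q g j i x)
                   /\ \det (gmat (gauge_metric q g) x) != 0.
Proof.
move=> qy hg x Ux; have [gs dg] := hg x Ux; split.
  by move=> i j; rewrite /gauge_metric gs.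
have -> : gmat (gauge_metric q g) x = q x *: gmat g x.
  by apply/matrixP => i j; rewrite !mxE.
by rewrite detZ mulf_neq0 // expf_neq0 // qy.
Qed.

Lemma main_sec (U : set pt) (g : metric_comp R n) (G Gs Gsh : christoffel R n) (q : pt -> R) :
  (3 <= n)%N ->
  open U ->
  pseudo_riemannian U g ->
  connection_on U G -> connection_on U Gs ->
  torsion_free U G -> torsion_free U Gs ->
  conjugate U G g Gs ->
  smooth_on U q -> (forall x, U x -> 0 < q x) ->
  conjugate U Gsh (gauge_metric q g) (gauge_dual q Gs) ->
  [<-> pi3_vanishes U G g;
       pi3_vanishes U Gs g;
       pi3_vanishes U Gsh (gauge_metric q g);
       pi3_vanishes U (gauge_dual q Gs) (gauge_metric q g)].
Proof.
move=> _ oU [sg gs dg] cG cGs tG tGs c1 sq qpos c2.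
have qy y : U y -> q y != 0 by move=> Uy; rewrite gt_eqF // qpos.
have hg : forall x, U x -> (forall i j, g i j x = g j i x) /\ \det (gmat g x) != 0.
  by move=> x Ux; split; [move=> i j; apply: gs | apply: dg].
have hg' := @gauge_metric_ok U g q qy hg.
have tGsh := @gsh_tf U G Gs Gsh g q sq qy sg dg gs tG c1 c2.
have tGd := @gd_tf U Gs q tGs.
have P0 := @pi3_closed U G g oU tG hg.
have P1 := @pi3_closed U Gs g oU tGs hg.
have P2 := @pi3_closed U Gsh (gauge_metric q g) oU tGsh hg'.
have P3 := @pi3_closed U (gauge_dual q Gs) (gauge_metric q g) oU tGd hg'.
have E01 := @closed_G_Gs U G Gs g oU cG cGs tG tGs sg dg c1.
have E02 := @closed_G_Gsh U G Gs Gsh g q oU sq qy sg dg gs cG c1 c2.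
have E13 := @closed_Gs_Gd U Gs q oU sq qy cGs.
tfae => H.
- by apply/P1; apply/E01; apply/P0.
- by apply/P2; apply/E02; apply/E01; apply/P1.
- by apply/P3; apply/E13; apply/E01; apply/E02; apply/P2.
- by apply/P0; apply/E01; apply/E13; apply/P3.
Qed.
End S.

Theorem proposition9p5 (R : realType) (n : nat) (U : set 'rV[R]_n)
    (g : metric_comp R n) (G Gs Gsh : christoffel R n) (q : 'rV[R]_n -> R) :
  (3 <= n)%N ->
  open U ->
  pseudo_riemannian U g ->
  connection_on U G -> connection_on U Gs ->
  torsion_free U G -> torsion_free U Gs ->
  conjugate U G g Gs ->
  smooth_on U q -> (forall x, U x -> 0 < q x) ->
  conjugate U Gsh (gauge_metric q g) (gauge_dual q Gs) ->
  [<-> pi3_vanishes U G g;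
       pi3_vanishes U Gs g;
       pi3_vanishes U Gsh (gauge_metric q g);
       pi3_vanishes U (gauge_dual q Gs) (gauge_metric q g)].
Proof. exact: main_sec. Qed.
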